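(* Let $\mathcal S=[M]\times[N]$, and for each $\mathbf i=(i_1,i_2)\in\mathcal S$ let $\mathcal J_{\mathbf i}\subset\mathcal S$ and $\mathbf M_{\mathbf i}\in\mathbb R^{M\times N}$ with support contained in $\mathcal J_{\mathbf i}$. Let $\mathbf M=\sum_{\mathbf i\in\mathcal S}(\mathbf e_{i_2}\otimes\mathbf e_{i_1})\mathrm{vec}(\mathbf M_{\mathbf i})^\top\in\mathbb R^{MN\times MN}$. Then for every positive integer $p$ and every $\mathbf i=(i_1,i_2)\in\mathcal S$, $$\|(\mathbf e_{i_2}\otimes\mathbf e_{i_1})^\top\mathbf M^p\|_{\ell_0}\le\min\{J_\square\,p^2,\ MN\},$$ where $\|\cdot\|_{\ell_0}$ denotes the number of nonzero entries.
   Context: $\mathrm{vec}$ denotes column-major vectorization; $\mathbf e_{i_1}\in\mathbb R^M$, $\mathbf e_{i_2}\in\mathbb R^N$ are standard basis vectors. $J_\square=\min\{(2k_1+1)(2k_2+1): k_1,k_2\ge0 \text{ integers such that } \mathcal J_{\mathbf i}\subset\{i_1-k_1,\dots,i_1+k_1\}\times\{i_2-k_2,\dots,i_2+k_2\}\ \text{for all } \mathbf i=(i_1,i_2)\in\mathcal S\}$, i.e. the size of the smallest rectangle shape that, centered at each site, contains that site's neighborhood. *)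

(* Defs.v *)
From HB Require Import structures.
From mathcomp Require Import all_boot all_order all_algebra.
From mathcomp Require Import reals.
From mathcomp.real_closed Require Import mxtens.
From mathcomp Require Import zify.
From Stdlib Require Import Lia.
Set Implicit Arguments.
Unset Strict Implicit.
Unset Printing Implicit Defensive.
Import Order.TTheory GRing.Theory Num.Theory.
Local Open Scope ring_scope.

Definition site (M N : nat) := ('I_M * 'I_N)%type.

Definition evec (R : pzRingType) (n : nat) (i : 'I_n) : 'cV[R]_n := delta_mx i 0.

(* The entry A i1 i2
   sits at index i2 * M + i1, matching the Kronecker product e_{i2} (x) e_{i1}
   given by mathcomp-real-closed's [tensmx] (notation A *t B). *)
Definition vec (R : Type) (M N : nat) (A : 'M[R]_(M, N)) : 'cV[R]_(N * M) :=
  \col_k A (mxtens_unindex k).2 (mxtens_unindex k).1.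

Definition bigM (R : pzRingType) (M N : nat) (Mi : site M N -> 'M[R]_(M, N))
  : 'M[R]_(N * M) :=
  \sum_(i : site M N) (tensmx (evec R i.2) (evec R i.1)) *m (vec (Mi i))^T.

Definition l0 (R : pzRingType) (m n : nat) (A : 'M[R]_(m, n)) : nat :=
  #|[set ij : 'I_m * 'I_n | A ij.1 ij.2 != 0]|.

Definition rect_contains (M N : nat) (J : site M N -> {set site M N})
  (k1 k2 : nat) : bool :=
  [forall i : site M N, forall j in J i,
     [&& (j.1 <= i.1 + k1)%N, (i.1 <= j.1 + k1)%N,
         (j.2 <= i.2 + k2)%N & (i.2 <= j.2 + k2)%N]].

(* n is the size (2k1+1)(2k2+1) of an admissible rectangle shape
   (k1, k2 <= n is automatic since n >= 2k+1). *)
Definition Jbox_pred (M N : nat) (J : site M N -> {set site M N}) : pred nat :=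
  fun n => [exists k1 : 'I_n.+1, exists k2 : 'I_n.+1,
              (n == (2 * k1 + 1) * (2 * k2 + 1))%N && rect_contains J k1 k2].

Lemma Jbox_exists (M N : nat) (J : site M N -> {set site M N}) :
  exists n, Jbox_pred J n.
Proof.
exists ((2 * M + 1) * (2 * N + 1))%N.
have hM : (M < ((2 * M + 1) * (2 * N + 1)).+1)%N.
  rewrite ltnS; nia.
have hN : (N < ((2 * M + 1) * (2 * N + 1)).+1)%N.
  rewrite ltnS; nia.
apply/existsP; exists (Ordinal hM); apply/existsP; exists (Ordinal hN).
rewrite /= eqxx /=; apply/forallP => i; apply/forall_inP => j _.
case: i j => [[a ha] [b hb]] [[c hc] [d hd]] /=.
apply/and4P; split; lia.
Qed.

Definition Jbox (M N : nat) (J : site M N -> {set site M N}) : nat :=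
  ex_minn (Jbox_exists J).

(* Main.v *)
Require Import Defs.
From HB Require Import structures.
From mathcomp Require Import all_boot all_order all_algebra.
From mathcomp Require Import reals.
From mathcomp.real_closed Require Import mxtens.
From mathcomp Require Import zify.
From Stdlib Require Import Lia.
Import Order.TTheory GRing.Theory Num.Theory.
Set Implicit Arguments.
Unset Strict Implicit.
Local Open Scope ring_scope.

Lemma card_interval n (c w : nat) :
  (#|[set a : 'I_n | (a <= c + w)%N && (c <= a + w)%N]| <= 2 * w + 1)%N.
Proof.
set A := [set a : 'I_n | _].
have -> : #|A| = size (map val (enum A)) by rewrite size_map cardE.
have -> : (2 * w + 1 = size (iota (c - w) (2 * w + 1)))%N by rewrite size_iota.
apply: uniq_leq_size; first by rewrite map_inj_uniq ?enum_uniq //; apply: val_inj.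
move=> x /mapP [a]; rewrite mem_enum inE => /andP [h1 h2] ->.
rewrite mem_iota; apply/andP; rewrite (_ : val a = nat_of_ord a) //; split; lia.
Qed.

Lemma prod_nz (R : realType) (x y : R) : x * y != 0 -> x != 0 /\ y != 0.
Proof. by rewrite mulf_eq0 negb_or => /andP. Qed.

Section S.
Variables (R : realType) (M N : nat).
Variables (J : site M N -> {set site M N}) (Mi : site M N -> 'M[R]_(M, N)).
Hypothesis hsupp : forall (i : site M N) (a : 'I_M) (b : 'I_N),
      Mi i a b != 0 -> (a, b) \in J i.

Definition s (k : 'I_(N * M)) : site M N :=
  ((mxtens_unindex k).2, (mxtens_unindex k).1).

Lemma s_inj : injective s.
Proof.
move=> k l /eqP e; apply: (can_inj (@mxtens_unindexK N M)); apply/eqP.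
by rewrite xpair_eqE andbC; move: e; rewrite /s xpair_eqE.
Qed.

Lemma tens_nz (j : site M N) k :
  (tensmx (evec R j.2) (evec R j.1)) k 0 != 0 -> s k = j.
Proof.
rewrite /tensmx mxE /s; case: j => a b /=.
move: (Ordinal (mxtens_index_proof1 k)) (Ordinal (mxtens_index_proof2 k)) (Ordinal (@mxtens_index_proof1 1 1 0)) (Ordinal (@mxtens_index_proof2 1 1 0)) => x y z t.
rewrite !mxE (ord1 z) (ord1 t) !eqxx !andbT.
case: (x =P b) => [->|_]; case: (y =P a) => [->|_] //=; rewrite ?mul0r ?mulr0 ?eqxx //.
Qed.

Lemma bigM_nz k l : bigM Mi k l != 0 -> s l \in J (s k).
Proof.
rewrite /bigM summxE.
case: (pickP (fun j => ((tensmx (evec R j.2) (evec R j.1)) *m (vec (Mi j))^T) k l != 0)) => [j Hj | H]; last first.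
  by rewrite big1 ?eqxx // => j _; move: (H j) => /= /negbFE /eqP.
move=> _; move: Hj; rewrite mxE big_ord1 => /prod_nz [h].
rewrite (tens_nz h) !mxE => h2.
exact: hsupp h2.
Qed.

Definition close (c1 c2 : nat) (k l : 'I_(N * M)) : bool :=
  [&& ((s l).1 <= (s k).1 + c1)%N, ((s k).1 <= (s l).1 + c1)%N,
      ((s l).2 <= (s k).2 + c2)%N & ((s k).2 <= (s l).2 + c2)%N].

Lemma pow_close k1 k2 : rect_contains J k1 k2 ->
  forall n k l, (bigM Mi ^+ n) k l != 0 -> close (n * k1) (n * k2) k l.
Proof.
move=> hr; elim => [|n IH] k l.
  rewrite expr0 !mxE; case: (k =P l) => [->|] _; last by rewrite mulr0n eqxx.
  by rewrite /close !mul0n !addn0 !leqnn.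
rewrite exprSr -mulmxE mxE.
case: (pickP (fun m : 'I_(N * M) => (bigM Mi ^+ n) k m * bigM Mi m l != 0)) => [m Hm | H]; last first.
  by rewrite big1 ?eqxx // => m _; move: (H m) => /= /negbFE /eqP.
move=> _; move: Hm.
move=> /prod_nz [h h2]; have := IH _ _ h; have := bigM_nz h2.
move/forallP: hr => /(_ (s m)) /forall_inP hr /hr.
rewrite /close => /and4P [a1 a2 a3 a4] /and4P [b1 b2 b3 b4].
move: a1 a2 a3 a4 b1 b2 b3 b4; rewrite !mulSn.
move: (nat_of_ord (s l).1) (nat_of_ord (s m).1) (nat_of_ord (s k).1) (nat_of_ord (s l).2) (nat_of_ord (s m).2) (nat_of_ord (s k).2) => x1 y1 z1 x2 y2 z2.
move=> *; apply/and4P; split; lia.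
Qed.

End S.

Theorem lemma4 (R : realType) (M N : nat)
  (J : site M N -> {set site M N}) (Mi : site M N -> 'M[R]_(M, N))
  (hsupp : forall (i : site M N) (a : 'I_M) (b : 'I_N),
      Mi i a b != 0 -> (a, b) \in J i)
  (p : nat) (hp : (0 < p)%N) (i : site M N) :
  (l0 ((tensmx (evec R i.2) (evec R i.1))^T *m (bigM Mi) ^+ p)
     <= minn (Jbox J * p ^ 2) (M * N))%N.
Proof.
set r := (_ *m _).
rewrite leq_min; apply/andP; split; last first.
  rewrite /l0; apply: leq_trans (max_card _) _.
  rewrite card_prod !card_ord; lia.
rewrite /Jbox; case: ex_minnP => n hn _.
move: hn => /existsP [k1' /existsP [k2' /andP [/eqP hn hrc]]].
rewrite hn; move: (nat_of_ord k1') (nat_of_ord k2') hrc => k1 k2 hrc; clear hn.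
set A := [set a : 'I_M | (a <= i.1 + p * k1)%N && (i.1 <= a + p * k1)%N].
set B := [set b : 'I_N | (b <= i.2 + p * k2)%N && (i.2 <= b + p * k2)%N].
set Y := [set l : 'I_(N * M) | (s l).1 \in A & (s l).2 \in B].
have h1 : (l0 r <= #|Y|)%N.
  rewrite /l0.
  have sinj : injective (fun ij : 'I_1 * 'I_(N * M) => ij.2).
    by move=> [a b] [c d] /= ->; rewrite (ord1 a) (ord1 c).
  rewrite -(card_imset _ sinj); apply: subset_leq_card.
  apply/subsetP => l /imsetP [[a b]]; rewrite inE /= => hnz ->.
  move: hnz; rewrite (ord1 a) /r mxE.
  case: (pickP (fun k : 'I_(N * M) => (tensmx (evec R i.2) (evec R i.1))^T 0 k * (bigM Mi ^+ p) k b != 0)) => [k Hk | H]; last first.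
    by rewrite big1 ?eqxx // => m _; move: (H m) => /= /negbFE /eqP.
  move=> _; move: Hk => /prod_nz [h h2]; rewrite mxE in h; have := pow_close hsupp hrc h2; rewrite /close (tens_nz h).
  by move=> /and4P [c1 c2 c3 c4]; rewrite !inE c1 c2 c3 c4.
have h2 : (#|Y| <= #|A| * #|B|)%N.
  rewrite -cardsX -(card_imset _ (@s_inj M N)); apply: subset_leq_card.
  by apply/subsetP => x /imsetP [l]; rewrite !inE => /andP [ha hb] ->; rewrite /= ha hb.
have hA := card_interval M i.1 (p * k1).
have hB := card_interval N i.2 (p * k2).
apply: (leq_trans h1); apply: (leq_trans h2).
apply: leq_trans (leq_mul hA hB) _.
nia.
Qed.
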